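(* Fix an undirected unweighted graph $G=(V,E)$ on $N$ vertices and $\delta\in[0,1]$. Let $r_1=1$ and $r_2\ge r_1$. There exists a coupling of two mixed $\delta$-updating chains $(S_t^{(1)})_{t\ge0}$ with mutant fitness $r_1$ and $(S_t^{(2)})_{t\ge0}$ with mutant fitness $r_2$, both started from the same $S_0\subseteq V$, such that $S_t^{(2)}\supseteq S_t^{(1)}$ for all $t\ge0$.
   Context: Mixed $\delta$-updating with mutant fitness $r$ on $G$: $S_t$ is the set of mutants after $t$ steps; each mutant has fitness $r$ and each wild-type fitness $1$; $f_S(x)$ is the fitness at $x$ when $S$ is the mutant set. At each step, with probability $\delta$ a death-Birth step: choose $v$ uniformly to die, choose a neighbor $u$ of $v$ with probability proportional to $f_S(u)$, $u$ copies its type onto $v$; with probability $1-\delta$ a Birth-death step: choose $u$ with probability proportional to $f_S(u)$ among all vertices, choose a uniformly random neighbor $v$ of $u$, $u$ copies its type onto $v$. *)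

(* Defs.v *)
From HB Require Import structures.
From mathcomp Require Import all_boot all_order all_algebra.
From mathcomp Require Import reals.
Set Implicit Arguments. Unset Strict Implicit. Unset Printing Implicit Defensive.
Import Order.TTheory GRing.Theory Num.Theory.
Local Open Scope ring_scope.

Section Moran.
Variables (R : realType) (V : finType) (adj : rel V).

Definition fit (r : R) (S : {set V}) (x : V) : R := if x \in S then r else 1.

Definition nbhd (v : V) : {set V} := [set u | adj v u].
Definition deg (v : V) : nat := #|nbhd v|.

Definition copy_type (S : {set V}) (u v : V) : {set V} :=
  if u \in S then v |: S else S :\ v.

Definition dB_prob (r : R) (S S' : {set V}) : R :=
  \sum_(v : V) \sum_(u : V | adj v u)
     (#|V|%:R)^-1 * (fit r S u / \sum_(w in nbhd v) fit r S w)
     * (S' == copy_type S u v)%:R.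

Definition Bd_prob (r : R) (S S' : {set V}) : R :=
  \sum_(u : V) \sum_(v : V | adj u v)
     (fit r S u / \sum_(w : V) fit r S w) * ((deg u)%:R)^-1
     * (S' == copy_type S u v)%:R.

Definition mixed_P (delta r : R) (S S' : {set V}) : R :=
  delta * dB_prob r S S' + (1 - delta) * Bd_prob r S S'.

Definition coupling_kernel (P1 P2 : {set V} -> {set V} -> R)
  (K : {set V} * {set V} -> {set V} * {set V} -> R) : Prop :=
  (forall x y, 0 <= K x y) /\
  (forall A B A', \sum_(B' : {set V}) K (A, B) (A', B') = P1 A A') /\
  (forall A B B', \sum_(A' : {set V}) K (A, B) (A', B') = P2 B B').

Fixpoint chain_law (K : {set V} * {set V} -> {set V} * {set V} -> R)
  (x0 : {set V} * {set V}) (t : nat) : {set V} * {set V} -> R :=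
  match t with
  | 0 => fun x => (x == x0)%:R
  | t'.+1 => fun y => \sum_(x : {set V} * {set V}) chain_law K x0 t' x * K x y
  end.

End Moran.

(* Main.v *)
Require Import Defs.
From HB Require Import structures.
From mathcomp Require Import all_boot all_order all_algebra.
From mathcomp Require Import reals ring lra.
Set Implicit Arguments. Unset Strict Implicit. Unset Printing Implicit Defensive.
Import Order.TTheory GRing.Theory Num.Theory.
Local Open Scope ring_scope.

Definition mn (R : realType) (T : finType) (w1 w2 : T -> R) (x : T) : R :=
  Num.min (w1 x) (w2 x).

Definition Jc (R : realType) (T : finType) (w1 w2 : T -> R) (x y : T) : R :=
  (x == y)%:R * mn w1 w2 x
  + (w1 x - mn w1 w2 x) * (w2 y - mn w1 w2 y) / \sum_z (w1 z - mn w1 w2 z).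

Lemma mn_le1 (R : realType) (T : finType) (w1 w2 : T -> R) x : mn w1 w2 x <= w1 x.
Proof. by rewrite /mn ge_min lexx. Qed.
Lemma mn_le2 (R : realType) (T : finType) (w1 w2 : T -> R) x : mn w1 w2 x <= w2 x.
Proof. by rewrite /mn ge_min lexx orbT. Qed.

Lemma Jc_ge0 (R : realType) (T : finType) (w1 w2 : T -> R)
  (h1 : forall x, 0 <= w1 x) (h2 : forall x, 0 <= w2 x) x y : 0 <= Jc w1 w2 x y.
Proof.
rewrite /Jc; apply: addr_ge0.
  apply: mulr_ge0; first exact: ler0n.
  by rewrite /mn le_min h1 h2.
apply: mulr_ge0; last rewrite invr_ge0; last apply: sumr_ge0 => z _.
all: rewrite ?mulr_ge0 // subr_ge0 ?mn_le1 ?mn_le2 //.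
Qed.

Lemma Jc_sum1 (R : realType) (T : finType) (w1 w2 : T -> R)
  (h1 : forall x, 0 <= w1 x) (h2 : forall x, 0 <= w2 x)
  (hW : \sum_z w1 z = \sum_z w2 z) x : \sum_y Jc w1 w2 x y = w1 x.
Proof.
rewrite /Jc big_split /= (bigD1 x) //= eqxx mul1r big1 ?addr0; last first.
  by move=> y /negbTE; rewrite eq_sym => ->; rewrite mul0r.
have -> : \sum_y (w1 x - mn w1 w2 x) * (w2 y - mn w1 w2 y) / \sum_z (w1 z - mn w1 w2 z)
   = (w1 x - mn w1 w2 x) * (\sum_y (w2 y - mn w1 w2 y)) / \sum_z (w1 z - mn w1 w2 z).
  by rewrite mulr_sumr mulr_suml.
have -> : \sum_y (w2 y - mn w1 w2 y) = \sum_z (w1 z - mn w1 w2 z) by rewrite !sumrB hW.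
have [D0|Dn0] := eqVneq (\sum_z (w1 z - mn w1 w2 z)) 0.
  have e : w1 x - mn w1 w2 x = 0.
    by apply: (psumr_eq0P _ D0) => // i _; rewrite subr_ge0 mn_le1.
  by rewrite D0 invr0 mulr0 addr0; move/eqP: e; rewrite subr_eq0 => /eqP.
by rewrite mulfK // addrC subrK.
Qed.

Lemma Jc_sum2 (R : realType) (T : finType) (w1 w2 : T -> R)
  (h1 : forall x, 0 <= w1 x) (h2 : forall x, 0 <= w2 x)
  (hW : \sum_z w1 z = \sum_z w2 z) y : \sum_x Jc w1 w2 x y = w2 y.
Proof.
rewrite /Jc big_split /= (bigD1 y) //= eqxx mul1r big1 ?addr0; last first.
  by move=> x /negbTE ->; rewrite mul0r.
have -> : \sum_x (w1 x - mn w1 w2 x) * (w2 y - mn w1 w2 y) / \sum_z (w1 z - mn w1 w2 z)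
   = (\sum_x (w1 x - mn w1 w2 x)) * (w2 y - mn w1 w2 y) / \sum_z (w1 z - mn w1 w2 z).
  by rewrite mulr_suml mulr_suml.
have E : \sum_y (w2 y - mn w1 w2 y) = \sum_z (w1 z - mn w1 w2 z) by rewrite !sumrB hW.
have [D0|Dn0] := eqVneq (\sum_z (w1 z - mn w1 w2 z)) 0.
  have e : w2 y - mn w1 w2 y = 0.
    by apply: (psumr_eq0P _ (etrans E D0)) => // i _; rewrite subr_ge0 mn_le2.
  by rewrite D0 invr0 mulr0 addr0; move/eqP: e; rewrite subr_eq0 => /eqP.
by rewrite mulrC mulrA mulVf // mul1r addrC subrK.
Qed.

Lemma Jc_neq (R : realType) (T : finType) (w1 w2 : T -> R) x y :
  x != y -> Jc w1 w2 x y != 0 -> w2 x < w1 x /\ w1 y < w2 y.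
Proof.
move=> /negbTE nxy; rewrite /Jc nxy mul0r add0r.
have [hx|hx] := leP (w1 x) (w2 x).
  by rewrite /mn (min_l hx) subrr !mul0r eqxx.
have [hy|hy] := leP (w2 y) (w1 y).
  by rewrite /mn (min_r hy) subrr mulr0 mul0r eqxx.
by [].
Qed.

Lemma sum_ind (R : realType) (U : finType) (c : U) :
  \sum_(a : U) ((a == c)%:R : R) = 1.
Proof.
by rewrite (bigD1 c) //= eqxx big1 ?addr0 // => a /negbTE ->.
Qed.

Definition wt (R : realType) (V : finType) (adj : rel V) (delta r : R) (S : {set V})
  (x : V * V) : R :=
  delta * ((adj x.2 x.1)%:R * ((#|V|%:R)^-1 * (fit r S x.1 / \sum_(w in nbhd adj x.2) fit r S w)))
  + (1 - delta) * ((adj x.1 x.2)%:R * ((fit r S x.1 / \sum_(w : V) fit r S w) * ((deg adj x.1)%:R)^-1)).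

Lemma sum_pair (R : realType) (V : finType) (G : V * V -> R) :
  \sum_(x : V * V) G x = \sum_(u : V) \sum_(v : V) G (u, v).
Proof. symmetry; rewrite pair_bigA; apply: eq_bigr => -[u v] _; by []. Qed.

Lemma mixed_P_wt (R : realType) (V : finType) (adj : rel V) (delta r : R) (S S' : {set V}) :
  mixed_P adj delta r S S' =
  \sum_(x : V * V) wt adj delta r S x * (S' == copy_type S x.1 x.2)%:R.
Proof.
rewrite /mixed_P /dB_prob /Bd_prob /wt.
rewrite (eq_bigr _ (fun x _ => mulrDl _ _ _)) big_split /=.
congr (_ + _).
  rewrite sum_pair /=.
  rewrite exchange_big mulr_sumr; apply: eq_bigr => v _.
  rewrite mulr_sumr big_mkcond; apply: eq_bigr => u _.
  by case: (adj v u); rewrite /= ?mul1r ?mul0r ?mulr0 ?mul0r // mulrA.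
rewrite sum_pair /=.
rewrite mulr_sumr; apply: eq_bigr => u _.
rewrite mulr_sumr big_mkcond; apply: eq_bigr => v _.
by case: (adj u v); rewrite /= ?mul1r ?mul0r ?mulr0 ?mul0r // !mulrA.
Qed.

Lemma fit_ge0 (R : realType) (V : finType) (r : R) (S : {set V}) x :
  0 <= r -> 0 <= fit r S x.
Proof. by rewrite /fit; case: ifP. Qed.

Lemma fit1 (R : realType) (V : finType) (S : {set V}) x : fit (1 : R) S x = 1.
Proof. by rewrite /fit if_same. Qed.

Lemma Fcmp (R : realType) (V : finType) (P : pred V) (A B : {set V}) (r2 : R)
  (hr2 : 1 <= r2) u (Pu : P u) :
  0 < \sum_(w | P w) fit (1:R) A w /\
  \sum_(w | P w) fit (1:R) A w <= \sum_(w | P w) fit r2 B w /\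
  \sum_(w | P w) fit r2 B w <= r2 * \sum_(w | P w) fit (1:R) A w.
Proof.
split; last split.
- rewrite (bigD1 u) //= fit1; apply: ltr_pwDl; first exact: ltr01.
  by apply: sumr_ge0 => w _; rewrite fit1.
- by apply: ler_sum => w _; rewrite fit1 /fit; case: ifP.
- rewrite mulr_sumr; apply: ler_sum => w _; rewrite fit1 mulr1 /fit; case: ifP => //.
Qed.

Lemma cmp_pos (R : realType) (F1 F2 r : R) : 0 < F1 -> F1 <= F2 -> F2 <= r * F1 ->
  (1 / F1 <= r / F2) /\ (1 / F2 <= 1 / F1).
Proof.
move=> h0 h1 h2; have h3 : 0 < F2 by apply: lt_le_trans h1.
split.
  by rewrite ler_pdivlMr // mul1r mulrC ler_pdivrMr.
by rewrite ler_pdivlMr // mul1r mulrC ler_pdivrMr // mul1r.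
Qed.

Lemma wt_ge0 (R : realType) (V : finType) (adj : rel V) (delta r : R) (S : {set V}) x :
  0 <= delta -> delta <= 1 -> 0 <= r -> 0 <= wt adj delta r S x.
Proof.
move=> d0 d1 r0; rewrite /wt; apply: addr_ge0; apply: mulr_ge0; rewrite ?subr_ge0 //;
  apply: mulr_ge0; rewrite ?ler0n //; apply: mulr_ge0; rewrite ?invr_ge0 ?ler0n //;
  apply: mulr_ge0; rewrite ?fit_ge0 // invr_ge0; apply: sumr_ge0 => w _; exact: fit_ge0.
Qed.

Lemma wt_mono (R : realType) (V : finType) (adj : rel V) (delta r2 : R)
  (d0 : 0 <= delta) (d1 : delta <= 1) (hr2 : 1 <= r2) (A B : {set V}) (u v : V) :
  (u \in B -> wt adj delta 1 A (u, v) <= wt adj delta r2 B (u, v)) /\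
  (u \notin B -> wt adj delta r2 B (u, v) <= wt adj delta 1 A (u, v)).
Proof.
rewrite /wt /=.
have hd : 0 <= 1 - delta by rewrite subr_ge0.
have hN : 0 <= (#|V|%:R : R)^-1 by rewrite invr_ge0 ler0n.
have hdeg : 0 <= ((deg adj u)%:R : R)^-1 by rewrite invr_ge0 ler0n.
have [h1 h2] : (u \in B -> 
    (adj v u)%:R * (fit (1:R) A u / \sum_(w in nbhd adj v) fit (1:R) A w) <=
    (adj v u)%:R * (fit r2 B u / \sum_(w in nbhd adj v) fit r2 B w) :> R) /\
   (u \notin B -> 
    (adj v u)%:R * (fit r2 B u / \sum_(w in nbhd adj v) fit r2 B w) <=
    (adj v u)%:R * (fit (1:R) A u / \sum_(w in nbhd adj v) fit (1:R) A w) :> R).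
  case hvu: (adj v u); last by rewrite !mul0r.
  have Pu : u \in nbhd adj v by rewrite inE.
  have [F0 [F1 F2]] := Fcmp (P := fun w => w \in nbhd adj v) A B hr2 Pu.
  have [c1 c2] := cmp_pos F0 F1 F2.
  by rewrite !mul1r fit1 /fit; split => hu; rewrite ?hu ?(negbTE hu).
have [g1 g2] : (u \in B -> 
    (adj u v)%:R * (fit (1:R) A u / \sum_(w : V) fit (1:R) A w) <=
    (adj u v)%:R * (fit r2 B u / \sum_(w : V) fit r2 B w) :> R) /\
   (u \notin B -> 
    (adj u v)%:R * (fit r2 B u / \sum_(w : V) fit r2 B w) <=
    (adj u v)%:R * (fit (1:R) A u / \sum_(w : V) fit (1:R) A w) :> R).
  have [F0 [F1 F2]] := Fcmp (P := xpredT) A B hr2 (u := u) isT.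
  have [c1 c2] := cmp_pos F0 F1 F2.
  case: (adj u v); last by rewrite !mul0r.
  by rewrite !mul1r fit1 /fit; split => hu; rewrite ?hu ?(negbTE hu).
split => hu; apply: lerD; apply: ler_wpM2l => //.
- by rewrite mulrCA [X in _ <= X]mulrCA; apply: ler_wpM2l => //; exact: h1.
- by rewrite !mulrA; apply: ler_wpM2r => //; rewrite -!mulrA; exact: g1.
- by rewrite mulrCA [X in _ <= X]mulrCA; apply: ler_wpM2l => //; exact: h2.
- by rewrite !mulrA; apply: ler_wpM2r => //; rewrite -!mulrA; exact: g2.
Qed.

Lemma sum_adj (R : realType) (V : finType) (adj : rel V) u :
  \sum_(v : V) ((adj u v)%:R : R) = (deg adj u)%:R.
Proof.
rewrite (eq_bigr (fun v => if v \in nbhd adj u then (1 : R) else 0)); last first.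
  by move=> v _; rewrite inE; case: (adj u v).
by rewrite -big_mkcond sumr_const /deg.
Qed.

Lemma sum_wt (R : realType) (V : finType) (adj : rel V)
  (no_isolated : forall v : V, exists u : V, adj v u)
  (delta r : R) (S : {set V}) (hr : 0 < r) (v0 : V) :
  \sum_x wt adj delta r S x = 1.
Proof.
rewrite /wt big_split /= -!mulr_sumr !sum_pair /=.
have Fpos : forall (P : pred V) u, P u -> 0 < \sum_(w | P w) fit r S w.
  move=> P u Pu; rewrite (bigD1 u) //=; apply: ltr_pwDl.
    by rewrite /fit; case: ifP.
  by apply: sumr_ge0 => w _; apply: fit_ge0; exact: ltW.
have -> : \sum_u \sum_v
    (adj v u)%:R * (#|V|%:R^-1 * (fit r S u / \sum_(w in nbhd adj v) fit r S w)) = 1.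
  rewrite exchange_big /=.
  rewrite (eq_bigr (fun _ => #|V|%:R^-1)); last first.
    move=> v _; have [u0 hu0] := no_isolated v.
    have hu : u0 \in nbhd adj v by rewrite inE.
    have hF := Fpos (fun w => w \in nbhd adj v) u0 hu.
    rewrite (_ : \sum_u _ = #|V|%:R^-1 * ((\sum_(u in nbhd adj v) fit r S u) / \sum_(w in nbhd adj v) fit r S w)).
      by rewrite mulfV ?mulr1 // gt_eqF.
    rewrite mulr_suml mulr_sumr [RHS]big_mkcond; apply: eq_bigr => u _; rewrite inE.
    by case: (adj v u); rewrite ?mul1r ?mul0r ?mulr0.
  rewrite sumr_const (_ : #|xpredT| = #|V|) // (_ : forall x : R, x *+ #|V| = x * #|V|%:R); last by move=> x; rewrite mulr_natr.
  rewrite mulVf // pnatr_eq0 -lt0n; apply/card_gt0P; by exists v0.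
rewrite (eq_bigr (fun u => fit r S u / \sum_w fit r S w)); last first.
  move=> u _; rewrite -mulr_suml sum_adj mulrC divfK //.
  have [w hw] := no_isolated u.
  rewrite pnatr_eq0 -lt0n /deg; apply/card_gt0P; exists w; by rewrite inE.
have hF := Fpos xpredT v0 isT.
by rewrite -mulr_suml mulfV ?gt_eqF // !mulr1 addrC subrK.
Qed.

Definition Kc (R : realType) (V : finType) (adj : rel V) (delta r2 : R)
  (p q : {set V} * {set V}) : R :=
  \sum_(x : V * V) \sum_(y : V * V)
    Jc (wt adj delta 1 p.1) (wt adj delta r2 p.2) x y
    * (q.1 == copy_type p.1 x.1 x.2)%:R * (q.2 == copy_type p.2 y.1 y.2)%:R.

Lemma copy_sub (V : finType) (A B : {set V}) u v :
  A \subset B -> copy_type A u v \subset copy_type B u v.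
Proof.
move=> AB; rewrite /copy_type; case: ifP => uA.
  by rewrite (subsetP AB _ uA) setUS.
case: ifP => uB; last exact: setSD.
apply: subset_trans (subD1set A v) _; apply: subset_trans AB _; exact: subsetUr.
Qed.

Lemma copy_cross (V : finType) (A B : {set V}) u1 v1 u2 v2 :
  A \subset B -> u1 \notin B -> u2 \in B ->
  copy_type A u1 v1 \subset copy_type B u2 v2.
Proof.
move=> AB u1B u2B; rewrite /copy_type u2B.
have -> : (u1 \in A) = false by apply/negP => /(subsetP AB); rewrite (negbTE u1B).
apply: subset_trans (subD1set A v1) _; apply: subset_trans AB _; exact: subsetUr.
Qed.

Lemma Kc0 (R : realType) (V : finType) (adj : rel V) (delta r2 : R)
  (d0 : 0 <= delta) (d1 : delta <= 1) (hr2 : 1 <= r2) (A B A' B' : {set V}) :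
  A \subset B -> ~~ (A' \subset B') -> Kc adj delta r2 (A, B) (A', B') = 0.
Proof.
move=> AB nAB; rewrite /Kc /=; apply: big1 => -[u1 v1] _; apply: big1 => -[u2 v2] _ /=.
have [e|nxy] := eqVneq (u1, v1) (u2, v2).
  case: e => <- <-.
  case eA: (A' == _); last by rewrite mulr0 mul0r.
  case eB: (B' == _); last by rewrite mulr0.
  by move: nAB; rewrite (eqP eA) (eqP eB) copy_sub.
have [J0|Jn0] := eqVneq (Jc (wt adj delta 1 A) (wt adj delta r2 B) (u1, v1) (u2, v2)) 0.
  by rewrite J0 !mul0r.
have [hx hy] := Jc_neq nxy Jn0.
have h1 : u1 \notin B.
  apply/negP => hu; have [m _] := wt_mono adj d0 d1 hr2 A B u1 v1.
  by move: (m hu); rewrite leNgt hx.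
have h2 : u2 \in B.
  apply/negPn/negP => hu; have [_ m] := wt_mono adj d0 d1 hr2 A B u2 v2.
  by move: (m hu); rewrite leNgt hy.
case eA: (A' == _); last by rewrite mulr0 mul0r.
case eB: (B' == _); last by rewrite mulr0.
by move: nAB; rewrite (eqP eA) (eqP eB) copy_cross.
Qed.

Unset Implicit Arguments.
Theorem mainTheorem13 (R : realType) (V : finType) (adj : rel V)
  (adj_sym : symmetric adj) (adj_irr : irreflexive adj)
  (no_isolated : forall v : V, exists u : V, adj v u)
  (delta r2 : R) (hdelta0 : 0 <= delta) (hdelta1 : delta <= 1)
  (hr2 : 1 <= r2) (S0 : {set V}) :
  exists K : {set V} * {set V} -> {set V} * {set V} -> R,
    coupling_kernel (mixed_P adj delta 1) (mixed_P adj delta r2) K /\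
    forall (t : nat) (x : {set V} * {set V}),
      0 < chain_law K (S0, S0) t x -> x.1 \subset x.2.
Proof.
have r20 : 0 < r2 by apply: lt_le_trans hr2; exact: ltr01.
have h1 : forall A x, 0 <= wt adj delta 1 A x.
  by move=> A x; apply: wt_ge0 => //; exact: ler01.
have h2 : forall B x, 0 <= wt adj delta r2 B x.
  by move=> B x; apply: wt_ge0 => //; exact: ltW.
have hW : forall A B, \sum_x wt adj delta 1 A x = \sum_x wt adj delta r2 B x.
  move=> A B; case: (pickP (fun _ : V => true)) => [v0 _|V0].
    by rewrite (sum_wt (r := 1) no_isolated delta A ltr01 v0) (sum_wt no_isolated delta B r20 v0).
  by rewrite !big_pred0 // => x; exact: V0 x.1.
have Kge0 : forall p q, 0 <= Kc adj delta r2 p q.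
  move=> p q; apply: sumr_ge0 => x _; apply: sumr_ge0 => y _.
  by rewrite !mulr_ge0 ?ler0n ?Jc_ge0.
exists (Kc adj delta r2); split.
  split; first by move=> ??; exact: Kge0.
  split.
    move=> A B A'; rewrite /Kc /= exchange_big mixed_P_wt; apply: eq_bigr => x _.
    rewrite exchange_big /= -(Jc_sum1 (h1 A) (h2 B) (hW A B) x) mulr_suml.
    apply: eq_bigr => y _.
    by rewrite -mulr_sumr sum_ind mulr1.
  move=> A B B'; rewrite /Kc /=.
  under eq_bigr => A' _ do rewrite exchange_big.
  rewrite exchange_big mixed_P_wt; apply: eq_bigr => y _.
  rewrite exchange_big /= -(Jc_sum2 (h1 A) (h2 B) (hW A B) y) mulr_suml.
  apply: eq_bigr => x _.
  by rewrite -mulr_suml -mulr_sumr sum_ind mulr1.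
have claim : forall t, (forall y, 0 <= chain_law (Kc adj delta r2) (S0, S0) t y) /\
    (forall y : {set V} * {set V}, ~~ (y.1 \subset y.2) -> chain_law (Kc adj delta r2) (S0, S0) t y = 0).
  elim=> [|t [IH0 IH1]] /=.
    split; first by move=> y; exact: ler0n.
    move=> y ny; case: eqP => // ey; by move: ny; rewrite ey subxx.
  split.
    by move=> y; apply: sumr_ge0 => x _; apply: mulr_ge0.
  move=> [A' B'] ny; apply: big1 => -[A B] _.
  case: (boolP (A \subset B)) => hAB.
    by rewrite (Kc0 adj hdelta0 hdelta1 hr2 hAB ny) mulr0.
  by rewrite IH1 ?mul0r.
move=> t x hx; apply/negPn/negP => nx.
have [_ c] := claim t.
by move: hx; rewrite (c x nx) ltxx.
Qed.
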